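(* Let $m,n,r,d$ be integers with $m,n\ge 2$, $d\ge 1$ and $0<r<\min\{m,n\}$. Define $$\mathcal{A}^{m\times n}_{d,r} := \left\{ L(\lambda)R(\lambda) : L(\lambda)\in\mathbb{C}[\lambda]^{m\times r},\ R(\lambda)\in\mathbb{C}[\lambda]^{r\times n},\ \deg(L_{*i})+\deg(R_{i*}) = d \text{ for } i=1,\ldots,r\right\},$$ and, for each integer $a=0,1,\ldots,rd$, the subsets $$\mathcal{A}^{m\times n}_{d,r,a} := \left\{ L(\lambda)R(\lambda) : L(\lambda)R(\lambda)\in\mathcal{A}^{m\times n}_{d,r},\ \sum_{i=1}^{r}\deg(R_{i*}) = a\right\}\subseteq \mathbb{C}[\lambda]^{m\times n}_{d,r}.$$ Then (i) $\mathcal{A}^{m\times n}_{d,r} = \bigcup_{0\le a\le rd}\mathcal{A}^{m\times n}_{d,r,a}$; (ii) $\mathbb{C}[\lambda]^{m\times n}_{d,r} = \bigcup_{0\le a\le rd}\overline{\mathcal{A}^{m\times n}_{d,r,a}}$; (iii) for every $P(\lambda)\in\mathbb{C}[\lambda]^{m\times n}_{d,r}$ there exists an integer $a$ with $0\le a\le rd$ such that $P(\lambda)\in\overline{\mathcal{A}^{m\times n}_{d,r,a}}$.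
   Context: $\mathbb{C}[\lambda]^{p\times q}$ denotes the set of $p\times q$ polynomial matrices with complex coefficients. $\mathbb{C}[\lambda]^{m\times n}_{d,r}$ is the set of $m\times n$ complex polynomial matrices of degree at most $d$ and normal rank (rank over the field of rational functions) at most $r$. For a polynomial matrix $X(\lambda)$, $X_{*i}$ denotes its $i$th column and $X_{i*}$ its $i$th row; the degree of a polynomial vector is the maximum degree of its entries, and the degree of the zero polynomial is $-\infty$ (so $\deg(L_{*i})+\deg(R_{i*})=d$ forces $L_{*i}\neq 0$, $R_{i*}\neq 0$). The topology is the one induced by the distance $\mathrm{dist}(P,Q)=\left(\sum_{i=0}^d\|P_i-Q_i\|_F^2\right)^{1/2}$ on polynomial matrices $P(\lambda)=\sum_{i=0}^d\lambda^iP_i$, $Q(\lambda)=\sum_{i=0}^d\lambda^iQ_i$ of degree at most $d$, where $\|\cdot\|_F$ is the Frobenius norm; $\overline{\mathcal{X}}$ denotes the closure of a set $\mathcal{X}$. *)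

(* Defs.v *)
From mathcomp Require Import all_boot all_order all_algebra.
From mathcomp Require Import fraction reals.
From mathcomp.real_closed Require Import complex.

Set Implicit Arguments.
Unset Strict Implicit.
Unset Printing Implicit Defensive.

Import Order.TTheory GRing.Theory Num.Theory.
Local Open Scope ring_scope.

(* "size" of a polynomial matrix (vector): max of the sizes of its entries;
   it is 0 iff the matrix is 0, and otherwise equals degree + 1. *)
Definition mxsize (C : nzRingType) (p q : nat) (A : 'M[{poly C}]_(p, q)) : nat :=
  \max_(i < p) \max_(j < q) size (A i j).

(* Degree of a NONZERO polynomial vector/matrix: maximum of the degrees of
   the entries.  (The zero vector has degree -oo; this case is excluded
   separately wherever it matters.) *)
Definition mxdeg (C : nzRingType) (p q : nat) (A : 'M[{poly C}]_(p, q)) : nat :=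
  (mxsize A).-1.

(* deg(A) <= d, for d : nat (also true for A = 0, degree -oo). *)
Definition deg_le (C : nzRingType) (p q : nat) (A : 'M[{poly C}]_(p, q)) (d : nat) : Prop :=
  forall i j, (size (A i j) <= d.+1)%N.

Definition normal_rank (C : idomainType) (p q : nat) (A : 'M[{poly C}]_(p, q)) : nat :=
  \rank (map_mx (@FracField.tofrac _ : {poly C} -> {fraction {poly C}}) A).

Definition polymx_dr (R : rcfType) (m n d r : nat) (P : 'M[{poly R[i]}]_(m, n)) : Prop :=
  deg_le P d /\ (normal_rank P <= r)%N.

(* A^{m x n}_{d,r,a}: P = L R with deg(L_{*i}) + deg(R_{i*}) = d for all i
   (which forces L_{*i} <> 0 and R_{i*} <> 0), and sum_i deg(R_{i*}) = a. *)
Definition Aset_a (R : rcfType) (m n d r a : nat) (P : 'M[{poly R[i]}]_(m, n)) : Prop :=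
  exists (L : 'M[{poly R[i]}]_(m, r)) (Rm : 'M[{poly R[i]}]_(r, n)),
    P = L *m Rm /\
    (forall i : 'I_r, col i L != 0 /\ row i Rm != 0 /\
                      (mxdeg (col i L) + mxdeg (row i Rm))%N = d) /\
    (\sum_(i < r) mxdeg (row i Rm))%N = a.

Definition Aset (R : rcfType) (m n d r : nat) (P : 'M[{poly R[i]}]_(m, n)) : Prop :=
  exists (L : 'M[{poly R[i]}]_(m, r)) (Rm : 'M[{poly R[i]}]_(r, n)),
    P = L *m Rm /\
    (forall i : 'I_r, col i L != 0 /\ row i Rm != 0 /\
                      (mxdeg (col i L) + mxdeg (row i Rm))%N = d).

Definition sqmod (R : rcfType) (z : R[i]) : R := (complex.Re z) ^+ 2 + (complex.Im z) ^+ 2.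

Definition pdist (R : rcfType) (m n d : nat) (P Q : 'M[{poly R[i]}]_(m, n)) : R :=
  Num.sqrt (\sum_(k < d.+1) \sum_(i < m) \sum_(j < n) sqmod ((P i j)`_k - (Q i j)`_k)).

Definition in_closure (R : rcfType) (m n d : nat)
    (X : 'M[{poly R[i]}]_(m, n) -> Prop) (P : 'M[{poly R[i]}]_(m, n)) : Prop :=
  deg_le P d /\
  forall eps : R, 0 < eps -> exists Q, X Q /\ pdist d P Q < eps.

(* Main.v *)
Require Import Defs.
From mathcomp Require Import all_boot all_order all_algebra.
From mathcomp Require Import reals.
From mathcomp.real_closed Require Import complex.
Import Order.TTheory GRing.Theory Num.Theory.
Local Open Scope ring_scope.

From mathcomp Require Import fraction generic_quotient.
From Stdlib Require Import Classical_Prop Classical_Pred_Type.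
From mathcomp Require Import zify ring lra.
Set Implicit Arguments.
Unset Strict Implicit.
Unset Printing Implicit Defensive.

Section MxSize.
Variable (C : nzRingType).

Lemma mxsize_leP p q (A : 'M[{poly C}]_(p, q)) k :
  reflect (forall i j, (size (A i j) <= k)%N) (mxsize A <= k)%N.
Proof.
apply: (iffP idP) => [H i j|H].
  apply: leq_trans H; rewrite /mxsize.
  apply: leq_trans (leq_bigmax i); exact: (leq_bigmax j).
by apply/bigmax_leqP => i _; apply/bigmax_leqP => j _; exact: H.
Qed.

Lemma size_le_mxsize p q (A : 'M[{poly C}]_(p, q)) i j :
  (size (A i j) <= mxsize A)%N.
Proof. by move/mxsize_leP: (leqnn (mxsize A)); apply. Qed.

Lemma mxsize_eq0 p q (A : 'M[{poly C}]_(p, q)) : (mxsize A == 0)%N = (A == 0).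
Proof.
apply/idP/eqP => [H|->].
  apply/matrixP => i j; rewrite mxE; apply/eqP; rewrite -size_poly_eq0 -leqn0.
  by apply: leq_trans (size_le_mxsize _ _ _) _; rewrite leqn0.
by rewrite -leqn0; apply/mxsize_leP => i j; rewrite mxE size_poly0.
Qed.

Lemma mxdeg_size p q (A : 'M[{poly C}]_(p, q)) : A != 0 -> mxsize A = (mxdeg A).+1.
Proof.
by rewrite /mxdeg -mxsize_eq0; case: (mxsize A).
Qed.

Lemma mxsize_le_deg p q (A : 'M[{poly C}]_(p, q)) : (mxsize A <= (mxdeg A).+1)%N.
Proof. by rewrite /mxdeg; case: (mxsize A). Qed.

Lemma size_le_mxdeg p q (A : 'M[{poly C}]_(p, q)) i j :
  (size (A i j) <= (mxdeg A).+1)%N.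
Proof. exact: leq_trans (size_le_mxsize _ _ _) (mxsize_le_deg _). Qed.

End MxSize.

Lemma size_le_pred (F : nzRingType) (p : {poly F}) k :
  (size p <= k.+1)%N -> p`_k = 0 -> (size p <= k)%N.
Proof.
rewrite leq_eqVlt => /orP [/eqP H|//] Hk.
have : lead_coef p = 0 by rewrite /lead_coef H.
by move/eqP; rewrite lead_coef_eq0 => /eqP ->; rewrite size_poly0.
Qed.

Lemma size_sum_le (F : nzRingType) (I : finType) (f : I -> {poly F}) k :
  (forall i, size (f i) <= k)%N -> (size (\sum_i f i)%R <= k)%N.
Proof.
move=> H; apply: (big_ind (fun p : {poly F} => size p <= k)%N).
- by rewrite size_poly0.
- move=> x y hx hy; apply: leq_trans (size_add _ _) _; by rewrite geq_max hx hy.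
- by move=> i _; apply: H.
Qed.

Lemma rowD_ (R : nmodType) p q (A B : 'M[R]_(p, q)) i :
  row i (A + B) = row i A + row i B.
Proof. by apply/rowP => k; rewrite !mxE. Qed.

Lemma elim_id (R : comNzRingType) m n (X : 'M[R]_m) (A : 'M[R]_(m, n))
  (ej : 'cV[R]_m) (V : 'rV[R]_m) :
  V *m ej = 0 -> (X - X *m ej *m V) *m (A + ej *m (V *m A)) = X *m A.
Proof.
move=> h; rewrite mulmxDr !mulmxBl !mulmxA.
rewrite -[X *m ej *m V *m ej]mulmxA h mulmx0 !mul0mx subr0.
by rewrite subrK.
Qed.

Section Fact.
Variables (F : fieldType) (m n d : nat) (P : 'M[{poly F}]_(m, n)).

Definition lcmx (A : 'M[{poly F}]_(m, n)) : 'M[F]_(m, n) :=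
  \matrix_(j, b) (A j b)`_(mxdeg (row j A)).
Definition meas (A : 'M[{poly F}]_(m, n)) := (\sum_j mxsize (row j A))%N.
Definition Inv (X : 'M[{poly F}]_m) A (Y : 'M[{poly F}]_m) : Prop :=
  [/\ P = X *m A, A = Y *m P, forall j, (mxsize (row j A) <= d.+1)%N &
      forall a j, row j A != 0 -> (size (X a j) + mxdeg (row j A) <= d.+1)%N].
Definition indep (A : 'M[{poly F}]_(m, n)) := forall c : 'rV[F]_m,
  (forall j, row j A = 0 -> c 0 j = 0) -> c *m lcmx A = 0 -> c = 0.

Lemma step X A Y (c : 'rV[F]_m) : Inv X A Y ->
  (forall j, row j A = 0 -> c 0 j = 0) -> c *m lcmx A = 0 -> c != 0 ->
  exists X' A' Y', Inv X' A' Y' /\ (meas A' < meas A)%N.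
Proof.
move=> [hP hA hsz hX] hsupp hc cn0.
have [j1 cj1] : exists j1, c 0 j1 != 0 by apply/rV0Pn.
pose e_ j := mxdeg (row j A).
pose j0 := [arg max_(j > j1 | c 0 j != 0) e_ j].
have [j0c j0max] : c 0 j0 != 0 /\ forall j, c 0 j != 0 -> (e_ j <= e_ j0)%N.
  by rewrite /j0; case: arg_maxnP.
pose e := e_ j0.
have rj0 : row j0 A != 0 by apply: contra j0c => /eqP /hsupp ->.
pose W : 'rV[{poly F}]_m := \row_j ((c 0 j / c 0 j0)%:P * 'X^(e - e_ j)).
pose ej := (delta_mx j0 0 : 'cV[{poly F}]_m).
pose V := W - (delta_mx 0 j0 : 'rV_m).
have W0 : W 0 j0 = 1 by rewrite mxE divff // subnn expr0 mulr1.
have V0 : V 0 j0 = 0.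
  by rewrite /V [LHS]mxE W0 !mxE !eqxx subrr.
have Vj : forall j, j != j0 -> V 0 j = W 0 j.
  by move=> j hj; rewrite !mxE eqxx /= (negPf hj) subr0.
have Ve : V *m ej = 0.
  apply/matrixP => i k; rewrite !ord1 [LHS]mxE (bigD1 j0) //= V0 mul0r add0r.
  rewrite big1 => [|jj hj]; first by rewrite mxE.
  by rewrite [ej jj 0]mxE (negPf hj) mulr0.
pose A' := A + ej *m (V *m A).
pose X' := X - (X *m ej) *m V.
pose Y' := (1 + ej *m V) *m Y.
have rowA' : forall j, row j A' = if j == j0 then W *m A else row j A.
  move=> j0'; rewrite /A' rowD_ row_mul.
  have -> : row j0' ej = (j0' == j0)%:R.
    apply/rowP => kk; rewrite (ord1 kk) !mxE eqxx andbT.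
    by case: (j0' == j0); rewrite /= ?mulr1n ?mulr0n ?mxE.
  case: eqP => [->|_]; last by rewrite mul0mx addr0.
  by rewrite mul1mx /V mulmxBl -rowE addrC subrK.
have X'E : forall a j, X' a j = X a j - X a j0 * V 0 j.
  move=> a j; rewrite !mxE big_ord1 !mxE (bigD1 j0) //= big1 => [|l hl].
    by rewrite !mxE !eqxx mulr1 addr0.
  by rewrite !mxE (negPf hl) mulr0.
have Wc0 : forall i j, c 0 j = 0 -> W i j = 0.
  by move=> i j hj; rewrite mxE hj mul0r mul0r.
have sizeW : forall i j, (size (W i j) <= (e - e_ j).+1)%N.
  move=> i j; rewrite mxE; apply: leq_trans (size_mul_leq _ _) _.
  rewrite size_polyXn; case: (c 0 j / c 0 j0 == 0) /eqP => [->|_].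
    by rewrite size_poly0.
  by rewrite size_polyC; case: (_ != 0).
have keyW : (mxsize (W *m A) <= e)%N.
  apply/mxsize_leP => i b; rewrite mxE.
  apply: size_le_pred.
    apply: size_sum_le => j.
    case: (c 0 j =P 0) => [hj|/eqP cj]; first by rewrite (Wc0 i j hj) mul0r size_poly0.
    apply: leq_trans (size_mul_leq _ _) _.
    have h1 := sizeW i j; have h2 := size_le_mxdeg (row j A) 0 b.
    rewrite mxE in h2; have h3 := j0max j cj; rewrite /e.
    change (is_true (size (A j b) <= (e_ j).+1)%N) in h2.
    change (is_true (e_ j <= e)%N) in h3.
    change (is_true ((size (W i j) + size (A j b)).-1 <= e.+1)%N).
    move: h1 h2 h3; generalize (e_ j) e (size (W i j)) (size (A j b)); clear; lia.
  rewrite coef_sum.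
  transitivity (\sum_j (c 0 j0)^-1 * (c 0 j * lcmx A j b)).
    apply: eq_bigr => j _.
    case: (c 0 j =P 0) => [hj|/eqP cj]; first by rewrite (Wc0 i j hj) mul0r coef0 hj mul0r mulr0.
    have h3 := j0max j cj.
    rewrite !mxE -mulrA coefCM coefXnM ltnNge leq_subr /= subKn //.
    by rewrite /e_ mulrA [(c 0 j0)^-1 * _]mulrC.
  rewrite -mulr_sumr.
  have := congr1 (fun M : 'rV[F]_n => M 0 b) hc; rewrite !mxE => ->.
  by rewrite mulr0.
have hsj0 : mxsize (row j0 A) = e.+1 by rewrite mxdeg_size.
exists X', A', Y'; split; last first.
  rewrite /meas (bigD1 j0) //= [X in (_ < X)%N](bigD1 j0) //= rowA' eqxx.
  rewrite hsj0 -addSn; apply: leq_add; first by rewrite ltnS.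
  by apply/eq_leq/eq_bigr => j hj; rewrite rowA' (negPf hj).
split.
- by rewrite /X' /A' elim_id.
- by rewrite /Y' -mulmxA -hA mulmxDl mul1mx /A' mulmxA.
- move=> j; rewrite rowA'; case: eqP => _; last exact: hsz.
  apply: leq_trans keyW _; rewrite -ltnS -hsj0; exact: leq_trans (hsz j0) _.
- move=> a j; rewrite rowA' X'E.
  case: (j =P j0) => [-> _|/eqP hj rj].
    rewrite V0 mulr0 subr0.
    apply: leq_trans (hX a j0 rj0); rewrite leq_add2l.
    rewrite {2}/mxdeg hsj0 /=; exact: leq_trans (leq_pred _) keyW.
  rewrite (Vj _ hj).
  case: (c 0 j =P 0) => [/(Wc0 0) ->|/eqP cj]; first by rewrite mulr0 subr0; apply: hX.
  have h3 := j0max j cj.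
  apply: leq_trans (leq_add (size_add _ _) (leqnn _)) _.
  rewrite size_opp addn_maxl geq_max (hX a j rj) /=.
  have h4 := size_mul_leq (X a j0) (W 0 j); have h1 := sizeW 0 j; have h5 := hX a j0 rj0.
  change (is_true (e_ j <= e)%N) in h3.
  change (is_true (size (X a j0) + e <= d.+1)%N) in h5.
  change (is_true (size (X a j0 * W 0 j)%R + e_ j <= d.+1)%N).
  move: h1 h3 h4 h5; generalize (e_ j) e (size (X a j0 * W 0 j)%R) (size (X a j0)) (size (W 0%R j)).
  clear; lia.
Qed.

Lemma reduce_all k X A Y : (meas A <= k)%N -> Inv X A Y ->
  exists X' A' Y', Inv X' A' Y' /\ indep A'.
Proof.
elim: k X A Y => [|k IH] X A Y hk hinv;
  (case: (classic (indep A)) => [hi|hni]; first by exists X, A, Y);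
  (have [c [hs [hc cn0]]] : exists c : 'rV[F]_m,
     (forall j, row j A = 0 -> c 0 j = 0) /\ c *m lcmx A = 0 /\ c != 0 by
    apply: NNPP => hno; apply: hni => c hs hc; apply/eqP; apply: NNPP => hn;
    apply: hno; exists c; split => //; split => //; apply/negP);
  have [X' [A' [Y' [h1 h2]]]] := step hinv hs hc cn0.
  by move: (leq_trans h2 hk).
by apply: (IH X' A' Y') => //; rewrite -ltnS; apply: leq_trans h2 hk.
Qed.

Lemma Inv_init : deg_le P d -> Inv 1%:M P 1%:M.
Proof.
move=> hP; split; rewrite ?mul1mx //.
  by move=> j; apply/mxsize_leP => i b; rewrite mxE; apply: hP.
move=> a j _; rewrite mxE.
have : (mxsize (row j P) <= d.+1)%N by apply/mxsize_leP => i b; rewrite mxE; apply: hP.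
rewrite /mxdeg; case: (a == j); rewrite ?mulr1n ?mulr0n ?size_poly1 ?size_poly0;
  case: (mxsize _) => //= *; lia.
Qed.

End Fact.

Lemma frac_repr (R : idomainType) (x : {fraction R}) :
  exists p q : R, q != 0 /\ x * FracField.tofrac q = FracField.tofrac p.
Proof.
elim/quotW: x => f.
exists f.1, f.2; split; first exact: denom_ratioP.
unlock FracField.tofrac.
rewrite /GRing.mul /= !piE.
apply/eqmodP; rewrite /= FracField.equivfE.
rewrite /FracField.mulf !numden_Ratio ?oner_neq0 ?mulf_neq0 ?denom_ratioP ?oner_neq0 //.
by rewrite !mulr1 mulrC.
Qed.

Lemma coef_mul_top (F : nzRingType) (p q : {poly F}) a b :
  (size p <= a.+1)%N -> (size q <= b.+1)%N -> (p * q)`_(a + b) = p`_a * q`_b.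
Proof.
move=> hp hq.
have ha : (a < (a + b).+1)%N by rewrite ltnS leq_addr.
rewrite coefM (bigD1 (Ordinal ha)) //= big1 ?addr0; first by rewrite addKn.
move=> i hi; have {}hi : (val i != a) by apply: contraNneq hi => h; apply/eqP/val_inj.
case: (ltngtP i a) => h; last by case/negP: hi; apply/eqP; exact: h.
  by rewrite [q`__]nth_default ?mulr0 //; apply: leq_trans hq _; lia.
by rewrite [p`__]nth_default ?mul0r //; apply: leq_trans hp _.
Qed.

Section Rank.
Variables (F : fieldType) (m n d : nat) (P : 'M[{poly F}]_(m, n)).
Local Notation K := {fraction {poly F}}.
Local Notation tof := (@FracField.tofrac {poly F}).

Lemma clear_den (y : 'rV[K]_m) :
  exists (b : {poly F}) (z : 'rV[{poly F}]_m), b != 0 /\ map_mx tof z = tof b *: y.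
Proof.
have [f hf] : exists f : 'I_m -> {poly F} * {poly F},
    forall j, (f j).2 != 0 /\ y 0 j * tof (f j).2 = tof (f j).1.
  suff H : forall j : 'I_m, exists pq : {poly F} * {poly F},
      pq.2 != 0 /\ y 0 j * tof pq.2 = tof pq.1.
    by have [f hf] := fin_all_exists H; exists f.
  move=> j; have [p [q [h1 h2]]] := frac_repr (y 0 j).
  by exists (p, q).
exists (\prod_j (f j).2), (\row_j ((f j).1 * \prod_(i | i != j) (f i).2)).
split; first by apply/prodf_neq0 => i _; case: (hf i).
apply/rowP => j; rewrite !mxE rmorphM !rmorph_prod [X in _ = X * _](bigD1 j) //=.
case: (hf j) => _ <-; ring.
Qed.

Lemma lead_relation (A : 'M[{poly F}]_(m, n)) (z : 'rV[{poly F}]_m) :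
  z *m A = 0 -> indep A -> forall j, row j A != 0 -> z 0 j = 0.
Proof.
move=> hz hind j0 hj0; apply/eqP; apply: NNPP => hz0; move/negP: hz0 => hz0.
pose ok j := (row j A != 0) && (z 0 j != 0).
pose D_ j := (size (z 0%R j) + mxdeg (row j A))%N.
have okj0 : ok j0 by rewrite /ok hj0 hz0.
pose jm := [arg max_(j > j0 | ok j) D_ j].
have [okm maxm] : ok jm /\ forall j, ok j -> (D_ j <= D_ jm)%N.
  by rewrite /jm; case: arg_maxnP.
pose D := D_ jm.
pose c : 'rV[F]_m := \row_j (if ok j && (D_ j == D) then lead_coef (z 0 j) else 0).
have : c = 0.
  apply: hind.
    by move=> j hj; rewrite mxE /ok hj eqxx.
  apply/rowP => b; rewrite !mxE.
  have h := congr1 (fun M : 'rV[{poly F}]_n => (M 0 b)`_(D.-1)) hz.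
  rewrite /= !mxE coef0 coef_sum in h.
  transitivity (\sum_i (z 0 i * A i b)`_D.-1); last exact: h.
  apply: eq_bigr => j _; rewrite !mxE.
  case okj : (ok j); last first.
    rewrite /= mul0r; move: okj; rewrite /ok; case: (row j A =P 0) => [hr|_] /= hz'.
      have -> : A j b = 0 by have := congr1 (fun M : 'rV[{poly F}]_n => M 0 b) hr; rewrite !mxE.
      by rewrite mulr0 coef0.
    by move/negbT: hz'; rewrite negbK => /eqP ->; rewrite mul0r coef0.
  have hle := maxm j okj.
  move: okj; rewrite /ok => /andP [rj zj].
  have sz : (0 < size (z 0%R j))%N by rewrite size_poly_gt0.
  have sA : (size (A j b) <= (mxdeg (row j A)).+1)%N.
    by have := size_le_mxdeg (row j A) 0 b; rewrite mxE.
  case: eqP => [hD|hD] /=.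
    have -> : D.-1 = ((size (z 0%R j)).-1 + mxdeg (row j A))%N.
      by rewrite -hD /D_; lia.
    rewrite coef_mul_top //; last by rewrite prednK.
  rewrite mul0r [RHS]nth_default //.
  apply: leq_trans (size_mul_leq _ _) _.
  move: hle hD sA; rewrite /D /D_.
  generalize (size (z 0%R j)) (size (A j b)) (mxdeg (row j A)) (size (z 0%R jm) + mxdeg (row jm A))%N.
  by clear; lia.
move/rowP/(_ jm); rewrite !mxE okm eqxx /= => /eqP.
rewrite lead_coef_eq0; move: okm; rewrite /ok => /andP [_ h1] h2.
by rewrite h2 in h1.
Qed.

Lemma kernel_zero (A : 'M[{poly F}]_(m, n)) : indep A ->
  forall y : 'rV[K]_m, y *m map_mx tof A = 0 -> forall j, row j A != 0 -> y 0 j = 0.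
Proof.
move=> hind y hy j hj.
have [b [z [bn0 hz]]] := clear_den y.
have zA : z *m A = 0.
  have h0 : map_mx tof (z *m A) = 0 by rewrite map_mxM hz -scalemxAl hy scaler0.
  apply/matrixP => i k; have := congr1 (fun M : 'M[K]_(1, n) => M i k) h0.
  rewrite /= [LHS]mxE [RHS]mxE => /eqP; rewrite tofrac_eq0 => /eqP ->.
  by rewrite mxE.
have := lead_relation zA hind hj.
move=> /(congr1 tof); rewrite tofrac0.
have := congr1 (fun M : 'rV[K]_m => M 0 j) hz; rewrite !mxE => -> /eqP.
by rewrite mulf_eq0 tofrac_eq0 (negPf bn0) /= => /eqP.
Qed.

Lemma card_le_rank (A : 'M[{poly F}]_(m, n)) : indep A ->
  (#|[set j | row j A != 0%R]| <= normal_rank A)%N.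
Proof.
move=> hind; set S := [set j | row j A != 0].
pose Sel : 'M[K]_(#|S|, m) := \matrix_(i, j) (enum_val i == j)%:R.
have hfree : row_free (Sel *m map_mx tof A).
  apply: inj_row_free => v; rewrite mulmxA => hv.
  apply/rowP => i; rewrite mxE.
  have hi : row (enum_val i) A != 0.
    by have := enum_valP i; rewrite inE.
  have := kernel_zero hind hv hi.
  rewrite !mxE (bigD1 i) //= big1 ?addr0 => [|l hl].
    by rewrite mxE eqxx mulr1.
  by rewrite mxE (inj_eq enum_val_inj) (negPf hl) mulr0.
move/eqP: hfree => <-; exact: mxrankM_maxr.
Qed.

End Rank.

Lemma factor (F : fieldType) m n d r (P : 'M[{poly F}]_(m, n)) (b0 : 'I_n) :
  deg_le P d -> (normal_rank P <= r)%N ->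
  exists (L : 'M[{poly F}]_(m, r)) (Rm : 'M[{poly F}]_(r, n)),
    P = L *m Rm /\ forall i, [/\ row i Rm != 0, (mxdeg (row i Rm) <= d)%N &
       forall a, (size (L a i) + mxdeg (row i Rm) <= d.+1)%N].
Proof.
move=> hdeg hrk.
have [X [A [Y [[hP hA hsz hX] hind]]]] := reduce_all (leqnn _) (Inv_init hdeg).
set S := [set j | row j A != 0%R].
have hk : (#|S| <= r)%N.
  apply: leq_trans (card_le_rank hind) _; apply: leq_trans hrk.
  by rewrite /normal_rank hA map_mxM; apply: mxrankM_maxr.
pose L : 'M[{poly F}]_(m, r) := \matrix_(a, i)
  oapp (fun i' : 'I_#|S| => X a (enum_val i')) 0 (insub (val i)).
pose Rm : 'M[{poly F}]_(r, n) := \matrix_(i, b)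
  oapp (fun i' : 'I_#|S| => A (enum_val i') b) ((b == b0)%:R) (insub (val i)).
exists L, Rm; split.
  apply/matrixP => a b; rewrite hP !mxE.
  pose G (i : nat) := oapp (fun i' : 'I_#|S| => X a (enum_val i') * A (enum_val i') b) 0 (insub i).
  rewrite (bigID (mem S)) /= [X in _ + X]big1 ?addr0; last first.
    move=> j; rewrite inE negbK => /eqP hj.
    by have := congr1 (fun M : 'rV[{poly F}]_n => M 0 b) hj; rewrite !mxE => ->; rewrite mulr0.
  rewrite big_enum_val /=.
  transitivity (\sum_(i < #|S|) G i).
    by apply: eq_bigr => i _; rewrite /G valK.
  rewrite (big_ord_widen r G hk) [RHS](bigID (fun i : 'I_r => (i < #|S|)%N)) /=.
  rewrite [X in _ = _ + X]big1 ?addr0; last first.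
    by move=> i hi; rewrite !mxE insubF ?mul0r //; apply/negbTE.
  by apply: eq_bigr => i hi; rewrite /G !mxE insubT /=.
move=> i.
have rowR : row i Rm = oapp (fun i' : 'I_#|S| => row (enum_val i') A)
    (\row_b ((b == b0)%:R)) (insub (val i)).
  by apply/rowP => b; rewrite !mxE; case: insub => //= [i'|]; rewrite mxE.
have LE : forall a, L a i = oapp (fun i' : 'I_#|S| => X a (enum_val i')) 0 (insub (val i)).
  by move=> a; rewrite mxE.
case h: (insub (val i) : option 'I_#|S|) => [i'|] /=; rewrite rowR h /=.
  have hi' : row (enum_val i') A != 0 by have := enum_valP i'; rewrite inE.
  split => //.
    have := hsz (enum_val i'); rewrite /mxdeg; case: (mxsize _) => //= *; lia.
  by move=> a; rewrite LE h /=; apply: hX.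
have hr1 : (mxsize (\row_b ((b == b0)%:R) : 'rV[{poly F}]_n) <= 1)%N.
  apply/mxsize_leP => i0 b; rewrite mxE; case: (b == b0);
  by rewrite ?mulr1n ?mulr0n ?size_poly1 ?size_poly0.
split.
- apply/eqP => /rowP /(_ b0); rewrite !mxE eqxx mulr1n => /eqP; apply/negP; exact: oner_neq0.
- by rewrite /mxdeg; move: hr1; case: (mxsize _) => //= -[].
- move=> a; rewrite LE h /= size_poly0 add0n /mxdeg; move: hr1; case: (mxsize _) => //= *; lia.
Qed.

Section ESec.
Local Open Scope complex_scope.

Lemma deg_le_mul (C : nzRingType) m n r d (L : 'M[{poly C}]_(m, r)) (Rm : 'M[{poly C}]_(r, n)) :
  (forall i, mxdeg (col i L) + mxdeg (row i Rm) <= d)%N -> deg_le (L *m Rm) d.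
Proof.
move=> h a b; rewrite mxE; apply: size_sum_le => i.
apply: leq_trans (size_mul_leq _ _) _.
have h1 := size_le_mxdeg (col i L) a 0; have h2 := size_le_mxdeg (row i Rm) 0 b.
rewrite !mxE in h1 h2; have h3 := h i.
change (is_true ((size (L a i) + size (Rm i b)).-1 <= d.+1)%N).
move: h1 h2 h3; generalize (size (L a i)) (size (Rm i b)) (mxdeg (col i L)) (mxdeg (row i Rm)).
clear; lia.
Qed.

Lemma Aset_a_deg (R : rcfType) m n d r a (Q : 'M[{poly R[i]}]_(m, n)) :
  Aset_a d r a Q -> deg_le Q d.
Proof.
move=> [L [Rm [-> [h _]]]]; apply: deg_le_mul => i.
by have [_ [_ ->]] := h i.
Qed.

Lemma sqmodNM (R : rcfType) (t : R) (z : R[i]) : sqmod (- (t%:C * z)) = t ^+ 2 * sqmod z.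
Proof. by case: z => x y; rewrite /sqmod /=; ring. Qed.

Lemma sqmod_ge0 (R : rcfType) (z : R[i]) : 0 <= sqmod z.
Proof. by rewrite /sqmod addr_ge0 // sqr_ge0. Qed.

Lemma perturb (R : rcfType) m n d r (L : 'M[{poly R[i]}]_(m, r)) (Rm : 'M[{poly R[i]}]_(r, n))
  (a0 : 'I_m) :
  (forall i, [/\ row i Rm != 0, (mxdeg (row i Rm) <= d)%N &
       forall a, (size (L a i) + mxdeg (row i Rm) <= d.+1)%N]) ->
  in_closure d (Aset_a d r (\sum_i mxdeg (row i Rm))%N) (L *m Rm).
Proof.
move=> h.
pose e_ i := mxdeg (row i Rm).
have hcol : forall i, (mxsize (col i L) <= (d - e_ i).+1)%N.
  move=> i; apply/mxsize_leP => a k; rewrite !mxE.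
  change (is_true (size (L a i) <= (d - e_ i).+1)%N).
  have [_ h2 h3] := h i; have := h3 a; move: h2; rewrite /e_.
  generalize (mxdeg (row i Rm)) (size (L a i)); clear; lia.
split.
  apply: deg_le_mul => i; have [_ h2 _] := h i; have hc := hcol i.
  have hd : (mxdeg (col i L) <= d - e_ i)%N by rewrite /mxdeg; move: hc; case: (mxsize (col i L)).
  change (is_true (mxdeg (col i L) + mxdeg (row i Rm) <= d)%N).
  move: h2 hd; rewrite /e_; generalize (mxdeg (col i L)) (mxdeg (row i Rm)); clear; lia.
move=> eps eps0.
pose D1 : 'M[{poly R[i]}]_(m, r) := \matrix_(a, i)
  if (a == a0) && ((L a0 i)`_(d - e_ i) == 0) then 'X^(d - e_ i) else 0.
pose K := \sum_(k < d.+1) \sum_(i < m) \sum_(j < n) sqmod (((D1 *m Rm) i j)`_k).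
have K0 : 0 <= K by do 3 (apply: sumr_ge0 => ? _); exact: sqmod_ge0.
pose t := eps / (Num.sqrt K + 1).
have t0 : 0 < t by rewrite divr_gt0 // ltr_pwDr ?sqrtr_ge0.
pose L' := L + (t%:C)%:P *: D1.
exists (L' *m Rm); split.
  exists L', Rm; split => //; split => // i.
  have [h1 h2 h3] := h i.
  have hs : mxsize (col i L') = (d - e_ i).+1.
    apply/eqP; rewrite eqn_leq; apply/andP; split.
      apply/mxsize_leP => a k; rewrite !mxE.
      apply: leq_trans (size_add _ _) _; rewrite geq_max.
      have := size_le_mxsize (col i L) a k; rewrite mxE => hh.
      rewrite (leq_trans hh (hcol i)) /=.
      case: ifP => _; last by rewrite mulr0 size_poly0.
      apply: leq_trans (size_mul_leq _ _) _; rewrite size_polyXn.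
      by case: (t%:C == 0) /eqP => [->|_]; rewrite ?size_polyC ?size_poly0 //; case: (_ != 0).
    apply: leq_trans (size_le_mxsize _ a0 0).
    rewrite !mxE eqxx /=.
    have : ((L a0 i + (t%:C)%:P * (if (L a0 i)`_(d - e_ i) == 0 then 'X^(d - e_ i) else 0))`_(d - e_ i) != 0).
      rewrite coefD; case: ((L a0 i)`_(d - e_ i) =P 0) => [hz|hne].
        by rewrite hz add0r coefCM coefXn eqxx mulr1 eq_complex /= negb_and (gt_eqF t0).
      by rewrite mulr0 coef0 addr0; apply/eqP.
    apply: contraR; rewrite -leqNgt => hle; apply/eqP; exact: nth_default.
  have hn : col i L' != 0 by rewrite -mxsize_eq0 hs.
  split; first exact: hn.
  split; first exact: h1.
  by rewrite /mxdeg hs /= -/(e_ i) subnK.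
rewrite /pdist.
have -> : \sum_(k < d.+1) \sum_(i < m) \sum_(j < n)
     sqmod (((L *m Rm) i j)`_k - ((L' *m Rm) i j)`_k) = t ^+ 2 * K.
  rewrite /K mulr_sumr; apply: eq_bigr => k _; rewrite mulr_sumr; apply: eq_bigr => i _.
  rewrite mulr_sumr; apply: eq_bigr => j _.
  have eL : L' *m Rm = L *m Rm + (t%:C)%:P *: (D1 *m Rm) by rewrite /L' mulmxDl -scalemxAl.
  have eij : ((L' *m Rm) i j)`_k = ((L *m Rm) i j)`_k + t%:C * ((D1 *m Rm) i j)`_k.
    rewrite eL; move: (L *m Rm) (D1 *m Rm) => M1 M2.
    by rewrite !mxE coefD coefCM.
  by rewrite eij opprD addrA subrr add0r sqmodNM.
rewrite sqrtrM ?sqr_ge0 // sqrtr_sqr gtr0_norm //.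
have s1 : 0 < Num.sqrt K + 1 by rewrite ltr_pwDr ?sqrtr_ge0.
apply: (@lt_le_trans _ _ (t * (Num.sqrt K + 1))).
  by rewrite ltr_pM2l // ltrDl ltr01.
by rewrite /t divfK // gt_eqF.
Qed.

End ESec.

Arguments sqmod : simpl never.

Lemma le_sum_one (C : numDomainType) (I : finType) (F : I -> C) i :
  (forall j, 0 <= F j) -> F i <= \sum_j F j.
Proof.
move=> h; rewrite (bigD1 i) //= lerDl; exact: sumr_ge0.
Qed.

Lemma near_unit (C : numFieldType) k (A B : 'M[C]_k) (dl : C) :
  A \in unitmx -> 0 <= dl ->
  k%:R * dl * (\sum_i \sum_j `|invmx A i j|) < 1 ->
  (forall i j, `|B i j - A i j| <= dl) -> B \in unitmx.
Proof.
move=> uA d0 hsmall hB; rewrite -row_free_unit; apply: inj_row_free => u hu.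
set M := \sum_i \sum_j `|invmx A i j|.
have M0 : 0 <= M by do 2 (apply: sumr_ge0 => ? _); exact: normr_ge0.
pose E := (A - B) *m invmx A.
have uE : u = u *m E.
  by rewrite /E mulmxA mulmxBr hu subr0 mulmxK.
have Eb : forall l j, `|E l j| <= dl * M.
  move=> l j; rewrite mxE; apply: le_trans (ler_norm_sum _ _ _) _.
  apply: (@le_trans _ _ (\sum_p dl * `|invmx A p j|)).
    apply: ler_sum => p _; rewrite normrM ler_wpM2r //.
    by rewrite mxE [(- B) l p]mxE -normrN opprD opprK addrC; apply: hB.
  rewrite -mulr_sumr ler_wpM2l // /M; apply: ler_sum => p _.
  rewrite (bigD1 j) //= lerDl; apply: sumr_ge0 => q _; exact: normr_ge0.
set s := \sum_j `|u 0 j|.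
have s0 : 0 <= s by apply: sumr_ge0 => ? _; exact: normr_ge0.
have uj : forall j, `|u 0 j| <= s * (dl * M).
  move=> j; rewrite {1}uE mxE; apply: le_trans (ler_norm_sum _ _ _) _.
  rewrite /s mulr_suml; apply: ler_sum => l _; rewrite normrM ler_wpM2l //.
have hs : s <= s * (k%:R * dl * M).
  rewrite {1}/s; apply: le_trans (ler_sum _ (fun j _ => uj j)) _.
  rewrite sumr_const card_ord [X in X <= _](_ : _ = s * (k%:R * dl * M)) //.
  by rewrite -mulr_natr; ring.
have s00 : s = 0.
  case: (s =P 0) => // hne.
  have spos : 0 < s by rewrite lt0r s0 andbT; apply/eqP.
  have : s * (k%:R * dl * M) < s * 1 by rewrite ltr_pM2l.
  by rewrite mulr1 => hlt; move: (le_lt_trans hs hlt); rewrite ltxx.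
apply/rowP => j; rewrite mxE; apply/eqP; rewrite -normr_eq0 eq_le normr_ge0 andbT -s00.
by rewrite /s (bigD1 j) //= lerDl; apply: sumr_ge0 => q _; exact: normr_ge0.
Qed.

Lemma square_sub (K : fieldType) m n (A : 'M[K]_(m, n)) :
  exists (f : 'I_(\rank A) -> 'I_m) (g : 'I_(\rank A) -> 'I_n),
    (\matrix_(i, j) A (f i) (g j)) \in unitmx.
Proof.
set f := maxrankfun A.
have h1 := maxrowsub_free A.
have e : \rank (rowsub f A)^T = \rank A by rewrite mxrank_tr; apply/eqP.
have := maxrowsub_free (rowsub f A)^T.
move: (maxrankfun (rowsub f A)^T); rewrite e => g hg.
exists f, g; rewrite -unitmx_tr -row_free_unit.
suff -> : (\matrix_(i, j) A (f i) (g j))^T = rowsub g (rowsub f A)^T by [].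
by apply/matrixP => i j; rewrite !mxE.
Qed.

Lemma poly_nonroot (C : numFieldType) (p : {poly C}) : p != 0 -> exists x, ~~ root p x.
Proof.
move=> hp; apply: NNPP => hno.
have hall : all (root p) [seq i%:R | i <- iota 0 (size p)].
  apply/allP => x _; apply: NNPP => hx; apply: hno; exists x; exact/negP.
have := max_poly_roots hp hall.
rewrite size_map size_iota ltnn.
suff hu : uniq [seq i%:R : C | i <- iota 0 (size p)] by move/(_ hu).
rewrite map_inj_uniq ?iota_uniq // => i j /eqP; rewrite eqr_nat => /eqP //.
Qed.

Lemma coef_close (R : rcfType) m n d (P Q : 'M[{poly R[i]}]_(m, n)) (eps : R) :
  0 < eps -> pdist d P Q < eps ->
  forall (t : 'I_d.+1) i j, `|(P i j)`_t - (Q i j)`_t| < (eps%:C)%C.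
Proof.
move=> e0 hd t i j.
set S := \sum_(k < d.+1) \sum_(i < m) \sum_(j < n) sqmod ((P i j)`_k - (Q i j)`_k).
have S0 : 0 <= S by do 3 (apply: sumr_ge0 => ? _); exact: sqmod_ge0.
have hS : S < eps ^+ 2.
  rewrite -(sqr_sqrtr S0) ltr_pXn2r // ?nnegrE ?sqrtr_ge0 ?ltW //.
have hz : sqmod ((P i j)`_t - (Q i j)`_t) <= S.
  rewrite /S (bigD1 t) //= (bigD1 i) //= (bigD1 j) //=.
  move: (sqmod _) => x0; rewrite -!addrA lerDl.
  apply: addr_ge0; first by apply: sumr_ge0 => ? _; exact: sqmod_ge0.
  apply: addr_ge0; first by do 2 (apply: sumr_ge0 => ? _); exact: sqmod_ge0.
  by do 3 (apply: sumr_ge0 => ? _); exact: sqmod_ge0.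
rewrite -(ltr_pXn2r (n := 2)) // ?nnegrE ?normr_ge0 ?ler0c ?ltW //.
rewrite -add_Re2_Im2 -rmorphXn ltcR.
exact: le_lt_trans hz hS.
Qed.

Lemma closure_rank (R : rcfType) m n d r a (P : 'M[{poly R[i]}]_(m, n)) :
  in_closure d (Aset_a d r a) P -> (normal_rank P <= r)%N.
Proof.
move=> [hdeg happ]; rewrite leqNgt; apply/negP => hk.
set PK := map_mx (@FracField.tofrac _) P.
have [f [g hu]] := square_sub PK.
rewrite /normal_rank -/PK in hk.
set kk := \rank PK in f g hu hk.
pose Ps : 'M[{poly R[i]}]_kk := \matrix_(i, j) P (f i) (g j).
have hdet : \det Ps != 0.
  have e : map_mx (@FracField.tofrac _) Ps = \matrix_(i, j) PK (f i) (g j).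
    by apply/matrixP => i j; rewrite !mxE.
  by move: hu; rewrite unitmxE unitfE -e det_map_mx tofrac_eq0.
have [x0 hx0] := poly_nonroot hdet.
pose A := map_mx (horner_eval x0) Ps.
have uA : A \in unitmx by rewrite unitmxE unitfE /A det_map_mx.
set M := \sum_i \sum_j `|invmx A i j|.
have M0 : 0 <= M by do 2 (apply: sumr_ge0 => ? _); exact: normr_ge0.
have kM0 : 0 <= kk%:R * M by rewrite mulr_ge0 ?ler0n.
pose dl : R[i] := (kk%:R * M + 1)^-1.
have hp1 : 0 < kk%:R * M + 1 by rewrite ltr_wpDl.
have dl0 : 0 < dl by rewrite invr_gt0.
have hsmall : kk%:R * dl * M < 1.
  rewrite mulrAC /dl ltr_pdivrMr // mul1r ltrDl ltr01 //.
pose Kl : R[i] := \sum_(t < d.+1) `|x0| ^+ t.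
have Kl0 : 0 <= Kl by apply: sumr_ge0 => ? _; rewrite exprn_ge0 ?normr_ge0.
have hk1 : 0 < Kl + 1 by rewrite ltr_wpDl.
pose ec : R[i] := dl / (Kl + 1).
have ec0 : 0 < ec by rewrite divr_gt0.
pose eps : R := complex.Re ec.
have eE : (eps%:C)%C = ec by rewrite RRe_real // ger0_real // ltW.
have e0 : 0 < eps by rewrite -ltcR eE.
have [Q [hQ hd]] := happ eps e0.
have hQdeg := Aset_a_deg hQ.
have [L [Rm [QE _]]] := hQ.
pose B := map_mx (horner_eval x0) (\matrix_(i, j) Q (f i) (g j) : 'M_kk).
have nB : B \notin unitmx.
  have -> : B = map_mx (horner_eval x0) (\matrix_(i, l) L (f i) l : 'M_(kk, r)) *m
                map_mx (horner_eval x0) (\matrix_(l, j) Rm l (g j) : 'M_(r, kk)).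
    rewrite -map_mxM; congr map_mx; apply/matrixP => i j; rewrite !mxE QE !mxE.
    by apply: eq_bigr => l _; rewrite !mxE.
  apply/negP => /mxrank_unit hr.
  have := mxrankM_maxl (map_mx (horner_eval x0) (\matrix_(i, l) L (f i) l : 'M_(kk, r)))
                      (map_mx (horner_eval x0) (\matrix_(l, j) Rm l (g j) : 'M_(r, kk))).
  rewrite hr => /leq_trans /(_ (rank_leq_col _)); rewrite leqNgt hk //.
apply/negP: nB; apply/negPn; apply: (near_unit uA (ltW dl0) hsmall) => i j.
rewrite !mxE /horner_eval -hornerN -hornerD.
set q := Q (f i) (g j); set p := P (f i) (g j).
have sz : (size (q - p)%R <= d.+1)%N.
  by apply: leq_trans (size_add _ _) _; rewrite size_opp geq_max hQdeg hdeg.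
rewrite (horner_coef_wide _ sz).
apply: le_trans (ler_norm_sum _ _ _) _.
apply: (@le_trans _ _ (\sum_(t < d.+1) ec * `|x0| ^+ t)).
  apply: ler_sum => t _; rewrite normrM normrX ler_wpM2r ?exprn_ge0 ?normr_ge0 //.
  rewrite coefB distrC -eE; apply: ltW; exact: coef_close e0 hd t (f i) (g j).
rewrite -mulr_sumr -/Kl /ec mulrAC ler_pdivrMr // ler_pM2l // lerDl ler01 //.
Qed.

Unset Implicit Arguments.
Set Strict Implicit.

Lemma sum_le_rd r d (e : 'I_r -> nat) : (forall i, e i <= d)%N -> (\sum_i e i <= r * d)%N.
Proof.
move=> h; apply: (@leq_trans (\sum_(i < r) d)%N); first by apply: leq_sum => i _; exact: h.
by rewrite sum_nat_const card_ord.
Qed.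

Theorem theorem4p3 (R : realType) (m n r d : nat) :
  (2 <= m)%N -> (2 <= n)%N -> (1 <= d)%N -> (0 < r)%N -> (r < minn m n)%N ->
  (* (i) *)
  (forall P : 'M[{poly R[i]}]_(m, n),
     Aset d r P <-> exists a : nat, (a <= r * d)%N /\ Aset_a d r a P) /\
  (* (ii) *)
  (forall P : 'M[{poly R[i]}]_(m, n),
     polymx_dr d r P <->
     exists a : nat, (a <= r * d)%N /\ in_closure d (Aset_a d r a) P) /\
  (* (iii) *)
  (forall P : 'M[{poly R[i]}]_(m, n),
     polymx_dr d r P ->
     exists a : nat, (a <= r * d)%N /\ in_closure d (Aset_a d r a) P).
Proof.
move=> hm hn hd hr hrmn.
have ii : forall P : 'M[{poly R[i]}]_(m, n),
     polymx_dr d r P <->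
     exists a : nat, (a <= r * d)%N /\ in_closure d (Aset_a d r a) P.
  move=> P; split.
    move=> [hdeg hrk].
    have b0 : 'I_n by exists 0%N; lia.
    have a0 : 'I_m by exists 0%N; lia.
    have [L [Rm [-> h]]] := factor b0 hdeg hrk.
    exists (\sum_i mxdeg (row i Rm))%N; split.
      by apply: sum_le_rd => i; have [] := h i.
    exact: perturb a0 h.
  move=> [a [ha hcl]]; split; first by case: hcl.
  exact: closure_rank hcl.
split; last first.
  split; first exact: ii.
  by move=> P /ii.
move=> P; split.
  move=> [L [Rm [hP h]]].
  exists (\sum_i mxdeg (row i Rm))%N; split.
    apply: sum_le_rd => i; have [_ [_ <-]] := h i; exact: leq_addl.
  by exists L, Rm.
by move=> [a [_ [L [Rm [hP [h _]]]]]]; exists L, Rm.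
Qed.
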